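(* There exists a perfect single-error-correcting code in $S_5$ with respect to the cyclic Kendall's $\tau$-distance; that is, there is a subset $\mathcal{C}\subseteq S_5$ such that for every $\pi\in S_5$ there is exactly one $\sigma\in\mathcal{C}$ with $d_\kappa(\sigma,\pi)\leq 1$.
   Context: $S_n$ denotes the set of all permutations of an $n$-element set, written as sequences $\sigma=[\sigma(1),\dots,\sigma(n)]$, where $\sigma(i)$ is the element in position $i$. A c-adjacent transposition applied to $\sigma$ either exchanges the entries in positions $i$ and $i+1$ for some $1\leq i\leq n-1$, or exchanges the entries $\sigma(1)$ and $\sigma(n)$ in positions $1$ and $n$. The cyclic Kendall's $\tau$-distance $d_\kappa(\sigma,\pi)$ is the minimum number of c-adjacent transpositions needed to transform $\sigma$ into $\pi$. *)

(* Defs.v *)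
From mathcomp Require Import all_boot all_fingroup.
Set Implicit Arguments. Unset Strict Implicit. Unset Printing Implicit Defensive.

(* A permutation sigma in S_n is a {perm 'I_n}; position i (0-based) holds sigma i. *)

Definition cadj (n : nat) (i j : 'I_n) : bool :=
  (j == i.+1 :> nat) || ((i == 0 :> nat) && (j == n.-1 :> nat) && (0 < n.-1)).

Definition cstep (n : nat) (sigma tau : {perm 'I_n}) : Prop :=
  exists i j : 'I_n, cadj i j /\ tau = (tperm i j * sigma)%g.
(* note: (tperm i j * sigma) x = sigma (tperm i j x), i.e. entries at positions i, j swapped *)

Fixpoint creach (n k : nat) (sigma tau : {perm 'I_n}) : Prop :=
  match k with
  | 0 => sigma = tau
  | k'.+1 => exists rho, cstep sigma rho /\ creach k' rho tau
  end.

Definition dkappa_le (n : nat) (sigma tau : {perm 'I_n}) (k : nat) : Prop :=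
  exists j, j <= k /\ creach j sigma tau.

(* Main.v *)
Require Import Defs.
From mathcomp Require Import all_boot all_fingroup.
Set Implicit Arguments. Unset Strict Implicit. Unset Printing Implicit Defensive.

Definition ballb (s p : {perm 'I_5}) : bool :=
  (s == p) || [exists i : 'I_5, exists j : 'I_5, cadj i j && (p == (tperm i j * s)%g)].

Lemma ballbP s p : dkappa_le s p 1 <-> ballb s p.
Proof.
split.
- case=> [[|[|k]]] [] //= _.
  + by move=> ->; rewrite /ballb eqxx.
  + case=> rho [[i [j [hc ->]]] <-].
    apply/orP; right; apply/existsP; exists i; apply/existsP; exists j.
    by rewrite hc eqxx.
- case/orP.
  + by move/eqP=> ->; exists 0.
  + case/existsP=> i /existsP [j /andP [hc /eqP ->]].
    exists 1; split => //=; exists (tperm i j * s)%g; split => //.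
    by exists i, j.
Qed.

Definition ls (p : {perm 'I_5}) : seq nat := [seq val (p i) | i <- enum 'I_5].

Lemma ls_inj : injective ls.
Proof.
move=> p q /eqP; rewrite (eq_sym) => /eqP h.
apply/permP => x; apply: val_inj.
have /eq_in_map H := h.
by symmetry; apply: H; rewrite mem_enum.
Qed.

Lemma nth_ls p k : k < 5 -> nth 0 (ls p) k = val (p (inord k)).
Proof.
move=> hk; rewrite (nth_map ord0); last by rewrite size_enum_ord.
congr (val (p _)); apply: val_inj => /=; rewrite inordK //; exact: nth_enum_ord.
Qed.

Lemma size_ls p : size (ls p) = 5.
Proof. by rewrite size_map size_enum_ord. Qed.

Definition sw (i j : nat) (l : seq nat) : seq nat :=
  map (fun k => nth 0 l (if k == i then j else if k == j then i else k)) (iota 0 5).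

Lemma ls_tperm (i j : 'I_5) p : ls (tperm i j * p)%g = sw i j (ls p).
Proof.
rewrite -[LHS](mkseq_nth 0) size_ls /mkseq /sw.
apply/eq_in_map => k; rewrite mem_iota add0n => /andP [_ hk].
rewrite nth_ls // permM.
have hi := ltn_ord i; have hj := ltn_ord j.
case: tpermP => [h|h|h1 h2].
- have -> : k = i by rewrite -(inordK hk) h.
  by rewrite eqxx nth_ls // inord_val.
- have -> : k = j by rewrite -(inordK hk) h.
  case: eqP => [->|_]; rewrite ?eqxx nth_ls //.
  + by rewrite inord_val.
  + by rewrite inord_val.
- have ki : (k == i) = false.
    by apply/negbTE/eqP => e; apply: h1; apply: val_inj; rewrite /= inordK.
  have kj : (k == j) = false.
    by apply/negbTE/eqP => e; apply: h2; apply: val_inj; rewrite /= inordK.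
  by rewrite ki kj nth_ls.
Qed.

Definition pairs : seq (nat * nat) := [:: (0,1); (1,2); (2,3); (3,4); (0,4)].

Definition ballS (w l : seq nat) : bool :=
  (w == l) || has (fun ij => w == sw ij.1 ij.2 l) pairs.

Lemma ball_fwd s p : ballb s p -> ballS (ls s) (ls p).
Proof.
case/orP => [/eqP -> | ]; first by rewrite /ballS eqxx.
case/existsP=> i /existsP [j /andP [hc /eqP hp]].
have hij : (val i, val j) \in pairs.
  move: hc; rewrite /cadj; clear hp.
  by case: i => [[|[|[|[|[|?]]]]] ?]; case: j => [[|[|[|[|[|?]]]]] ?].
have -> : s = (tperm i j * p)%g by rewrite hp mulgA tperm2 mul1g.
rewrite ls_tperm /ballS; apply/orP; right; apply/hasP.
by exists (val i, val j).
Qed.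

Lemma ball_bwd w p : ballS w (ls p) -> exists s, ls s = w /\ ballb s p.
Proof.
case/orP => [/eqP -> | /hasP [[a b] hab /= /eqP ->]]; first by exists p; rewrite /ballb eqxx.
have ha : a < 5 by move: hab; rewrite !inE => /or4P [|||/orP[|]] /eqP [-> _].
have hb : b < 5 by move: hab; rewrite !inE => /or4P [|||/orP[|]] /eqP [_ ->].
exists (tperm (inord a : 'I_5) (inord b) * p)%g; split.
  by rewrite ls_tperm /= !inordK.
apply/orP; right; apply/existsP; exists (inord a); apply/existsP; exists (inord b).
rewrite mulgA tperm2 mul1g eqxx andbT /cadj !inordK //.
by move: hab; rewrite !inE => /or4P [|||/orP[|]] /eqP [-> ->].
Qed.

Definition codel : seq (seq nat) :=
 [:: [:: 0; 2; 1; 3; 4]; [:: 0; 1; 4; 2; 3]; [:: 1; 0; 3; 2; 4]; [:: 2; 1; 3; 4; 0];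
     [:: 0; 3; 2; 4; 1]; [:: 3; 2; 4; 1; 0]; [:: 2; 0; 4; 3; 1]; [:: 4; 3; 1; 2; 0];
     [:: 3; 0; 1; 4; 2]; [:: 0; 4; 3; 1; 2]; [:: 4; 0; 2; 1; 3]; [:: 1; 4; 2; 3; 0];
     [:: 1; 2; 0; 4; 3]; [:: 4; 2; 3; 0; 1]; [:: 1; 3; 4; 0; 2]; [:: 3; 1; 2; 0; 4];
     [:: 3; 4; 0; 2; 1]; [:: 4; 1; 0; 3; 2]; [:: 2; 3; 0; 1; 4]; [:: 2; 4; 1; 0; 3]].

Lemma check : all (fun l => count (fun w => ballS w l) codel == 1)
                  (permutations [:: 0; 1; 2; 3; 4]).
Proof. vm_compute. reflexivity. Qed.

Lemma ls_perm p : ls p \in permutations [:: 0; 1; 2; 3; 4].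
Proof.
rewrite mem_permutations; apply: uniq_perm => //.
  by rewrite map_inj_uniq ?enum_uniq // => x y /val_inj /perm_inj.
move=> x; apply/mapP/idP.
  by case=> i _ ->; rewrite !inE; case: (p i) => [[|[|[|[|[|?]]]]] ?].
move=> hx; have hx5 : x < 5 by move: hx; rewrite !inE => /or4P [|||/orP[|]] /eqP ->.
exists ((p^-1)%g (inord x)); first by rewrite mem_enum.
by rewrite permKV /= inordK.
Qed.

Definition C0 : {set {perm 'I_5}} := [set s : {perm 'I_5} | ls s \in codel].

Lemma count1 (T : eqType) (P : pred T) (s : seq T) x y :
  count P s = 1 -> x \in s -> y \in s -> P x -> P y -> x = y.
Proof.
elim: s => //= a s IH.
case: (boolP (P a)) => Pa /=.
  move=> hc0; have hc : count P s = 0 by move: hc0; rewrite add1n => -[].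
  have nP z : z \in s -> ~~ P z.
    have : ~~ has P s by rewrite has_count hc.
    by move/hasPn; apply.
  rewrite !inE => /orP [/eqP ->|xs] /orP [/eqP ->|ys] Px Py //.
  + by move: (nP _ ys); rewrite Py.
  + by move: (nP _ xs); rewrite Px.
  + by move: (nP _ xs); rewrite Px.
rewrite add0n => hc; rewrite !inE => /orP [/eqP ->|xs] /orP [/eqP ->|ys] Px Py.
- by [].
- by move: Pa; rewrite Px.
- by move: Pa; rewrite Py.
- exact: IH.
Qed.

Theorem mainTheorem3 :
  exists C : {set {perm 'I_5}},
    forall pi : {perm 'I_5},
      exists! sigma : {perm 'I_5}, sigma \in C /\ dkappa_le sigma pi 1.
Proof.
exists C0 => pi.
have /allP /(_ _ (ls_perm pi)) /eqP hc := check.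
have : has (fun w => ballS w (ls pi)) codel by rewrite has_count hc.
case/hasP=> w wc /ball_bwd [s [hs hb]].
exists s; split.
  by split; [rewrite inE hs | apply/ballbP].
move=> t [ht /ballbP /ball_fwd hbt].
apply: ls_inj; apply: (count1 hc).
- by rewrite hs.
- by move: ht; rewrite inE.
- exact: (ball_fwd hb).
- exact: hbt.
Qed.
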